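(* Let $\lambda$ be a straight or skew shape with $n$ boxes and let $m\in\mathbb N=\{1,2,\dots\}$. There is a bijection $T[\lambda,\cdot|\cdot]\cup T[\lambda,\div]\to T[\lambda,m]$ which sends a tableau $X$ to the unique tableau in $T[\lambda,m]$ whose positive-content part and negative-content part coincide, as fillings, with those of $X$.
   Context: For a box in row $i$, column $j$ (rows numbered downward) its content is $j-i+\frac12$. A B-Young tableau is a filling of a skew diagram by the $2n$ numbers $\pm1,\dots,\pm n$, one per box, such that $c_{-k}=-c_k$ for $1\le k\le n$, where $c_k$ is the content of the box containing $k$; it is standard if entries increase along rows and down columns. For $m\in\mathbb N$, $T[\lambda,m]$ is the set of standard B-Young tableaux whose positive-content boxes form the shape $\lambda$ and whose smallest positive content is $m+\frac12$ (such a tableau is regarded as determined by its positive-content part). $T[\lambda,\cdot|\cdot]$ (resp. $T[\lambda,\div]$) is the set of standard B-Young tableaux having exactly one box of content $\frac12$ (and hence exactly one of content $-\frac12$) which can be divided by a vertical (resp. horizontal) straight line into two parts of $n$ boxes each, one consisting of boxes of negative content and the other of boxes of positive content, the positive part having shape $\lambda$.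
   Formalization: Every B-Young tableau, in $T[\lambda,m]$ as in $T[\lambda,\cdot|\cdot]$ and $T[\lambda,\div]$, is also centrally symmetric: its negative-content part is the 180° rotation of its positive-content part with all entries negated. The statement above fails without it. *)

(* Defs.v *)
(* boxes are pairs of integers (row, column), rows numbered
   downward. The content of box (i,j) is j - i + 1/2; we store the integer
   [diag b = j - i], so content = diag + 1/2.  Positive content <-> diag >= 0;
   the content of the box opposite to content diag+1/2 is (-diag-1)+1/2. *)
From mathcomp Require Import all_boot all_order all_algebra.
Set Implicit Arguments. Unset Strict Implicit. Unset Printing Implicit Defensive.
Import Order.TTheory GRing.Theory Num.Theory.
Local Open Scope ring_scope.

Definition box := (int * int)%type.

Definition diag (b : box) : int := b.2 - b.1.

Definition boxD (b t : box) : box := (b.1 + t.1, b.2 + t.2).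
Definition boxB (b t : box) : box := (b.1 - t.1, b.2 - t.2).

(* A filling: a total function, with value 0 meaning "no box here". *)
Definition filling := box -> int.

Definition in_dom (f : filling) (b : box) : bool := f b != 0.

(* skew diagrams (straight or skew shapes, possibly translated) = finite
   subsets of Z^2 that are convex for the product order *)
Definition skew_convex (D : box -> bool) : Prop :=
  forall a b c : box, D a -> D b ->
    a.1 <= c.1 <= b.1 -> a.2 <= c.2 <= b.2 -> D c.

Definition skew_shape (lam : seq box) : Prop :=
  uniq lam /\ skew_convex (fun b => b \in lam).

Definition B_Young (n : nat) (f : filling) : Prop :=
      (forall b, in_dom f b ->
         exists2 k : nat, (1 <= k <= n)%N & (f b = k%:Z \/ f b = - k%:Z)) /\
      (forall k : nat, (1 <= k <= n)%N ->
         (exists! b, f b = k%:Z) /\ (exists! b, f b = - k%:Z)) /\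
      skew_convex (in_dom f) /\
      (* c_{-k} = - c_k *)
      (forall b b', in_dom f b -> f b' = - f b -> diag b' = - diag b - 1) /\
      (* central symmetry: the negative part is the 180-degree rotation
         of the positive part (the tableau is determined by its positive part) *)
      (exists p q : int, forall b : box, f (p - b.1, q - b.2) = - f b) /\
      (forall i j j' : int, j < j' -> in_dom f (i, j) -> in_dom f (i, j') ->
         f (i, j) < f (i, j')) /\
      (forall i i' j : int, i < i' -> in_dom f (i, j) -> in_dom f (i', j) ->
         f (i, j) < f (i', j)).

Definition pos_part (f : filling) : filling :=
  fun b => if 0 <= diag b then f b else 0.
Definition neg_part (f : filling) : filling :=
  fun b => if diag b < 0 then f b else 0.

Definition same_filling (f g : filling) : Prop :=
  exists t : box, forall b, g (boxD b t) = f b.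

Definition pos_shape (lam : seq box) (f : filling) : Prop :=
  exists t : box, forall b,
    (in_dom f b && (0 <= diag b)) = (boxB b t \in lam).

Definition T_m (lam : seq box) (m : nat) (f : filling) : Prop :=
  [/\ B_Young (size lam) f, pos_shape lam f,
      (exists b, in_dom f b /\ diag b = m%:Z) &
      (forall b, in_dom f b -> 0 <= diag b -> m%:Z <= diag b)].

Definition one_half_unique (f : filling) : Prop :=
  exists! b, in_dom f b /\ diag b = 0.

Definition T_vert (lam : seq box) (f : filling) : Prop :=
  [/\ B_Young (size lam) f, pos_shape lam f, one_half_unique f &
      exists c : int,
        (forall b, in_dom f b -> (diag b < 0) = (b.2 < c)) \/
        (forall b, in_dom f b -> (0 <= diag b) = (b.2 < c))].

Definition T_horiz (lam : seq box) (f : filling) : Prop :=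
  [/\ B_Young (size lam) f, pos_shape lam f, one_half_unique f &
      exists c : int,
        (forall b, in_dom f b -> (diag b < 0) = (b.1 < c)) \/
        (forall b, in_dom f b -> (0 <= diag b) = (b.1 < c))].

Definition same_parts (X Y : filling) : Prop :=
  same_filling (pos_part X) (pos_part Y) /\
  same_filling (neg_part X) (neg_part Y).

(* Main.v *)
Require Import Defs.
From mathcomp Require Import all_boot all_order all_algebra zify.
Set Implicit Arguments. Unset Strict Implicit. Unset Printing Implicit Defensive.
Import Order.TTheory GRing.Theory Num.Theory.
Local Open Scope ring_scope.

Definition rho (p : int) (b : box) : box := (p - b.1, p - 1 - b.2).
Definition mk (Q : filling) (p : int) : filling := fun b => Q b - Q (rho p b).
Definition shift (P : filling) (t : box) : filling := fun b => P (boxB b t).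

Lemma rhoK p b : rho p (rho p b) = b.
Proof. case: b => i j; rewrite /rho /=; congr pair; lia. Qed.

Lemma diag_rho p b : diag (rho p b) = - diag b - 1.
Proof. case: b => i j; rewrite /rho /diag /=; lia. Qed.

Definition entriesP n (P : filling) := forall b, P b != 0 ->
  exists2 k : nat, (1 <= k <= n)%N & (P b = k%:Z \/ P b = - k%:Z).
Definition onceP n (P : filling) := forall k : nat, (1 <= k <= n)%N ->
  exists! b, P b = k%:Z \/ P b = - k%:Z.

Record goodP (n : nat) (P : filling) : Prop := GoodP {
  gp_a : forall b, P b != 0 -> 0 <= diag b;
  gp_e : entriesP n P;
  gp_o : onceP n P;
  gp_c : skew_convex (fun b => P b != 0);
  gp_r : forall i j j' : int, j < j' -> P (i,j) != 0 -> P (i,j') != 0 -> P (i,j) < P (i,j');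
  gp_l : forall i i' j : int, i < i' -> P (i,j) != 0 -> P (i',j) != 0 -> P (i,j) < P (i',j) }.

Lemma Qrho0 (Q : filling) p b : (forall b, Q b != 0 -> 0 <= diag b) ->
  Q b != 0 -> Q (rho p b) = 0.
Proof.
move=> Ha Hb; apply/eqP; apply: contraT => /Ha; rewrite diag_rho.
move: (Ha _ Hb); lia.
Qed.

Lemma mk_dom (Q : filling) p b : (forall b, Q b != 0 -> 0 <= diag b) ->
  (mk Q p b != 0) = (Q b != 0) || (Q (rho p b) != 0).
Proof.
move=> Ha; rewrite /mk; case: (boolP (Q b != 0)) => H /=.
  by rewrite (Qrho0 p Ha H) subr0 H.
move: H; rewrite negbK => /eqP ->; by rewrite sub0r oppr_eq0.
Qed.

Lemma mk_pos (Q : filling) p b : (forall b, Q b != 0 -> 0 <= diag b) ->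
  Q b != 0 -> mk Q p b = Q b.
Proof. by move=> Ha H; rewrite /mk (Qrho0 p Ha H) subr0. Qed.

Lemma mk_neg (Q : filling) p b : (forall b, Q b != 0 -> 0 <= diag b) ->
  Q (rho p b) != 0 -> mk Q p b = - Q (rho p b).
Proof.
move=> Ha H; rewrite /mk; have := Qrho0 p Ha H; rewrite rhoK => ->.
by rewrite sub0r.
Qed.

Lemma mk_rho (Q : filling) p b : mk Q p (rho p b) = - mk Q p b.
Proof. by rewrite /mk rhoK opprB. Qed.

Lemma pos_part_mk (Q : filling) p b : (forall b, Q b != 0 -> 0 <= diag b) ->
  pos_part (mk Q p) b = Q b.
Proof.
move=> Ha; rewrite /pos_part; case: ifP => Hd.
  case: (boolP (Q b != 0)) => H; first by rewrite mk_pos.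
  move: H; rewrite negbK => /eqP H; rewrite /mk H sub0r.
  case: (boolP (Q (rho p b) != 0)) => H2.
    by move: (Ha _ H2); rewrite diag_rho; move: Hd; lia.
  by move: H2; rewrite negbK => /eqP ->; rewrite oppr0.
case: (boolP (Q b != 0)) => H; last by move: H; rewrite negbK => /eqP ->.
by move: (Ha _ H); rewrite Hd.
Qed.

Lemma neg_part_mk (Q : filling) p b : (forall b, Q b != 0 -> 0 <= diag b) ->
  neg_part (mk Q p) b = - Q (rho p b).
Proof.
move=> Ha; rewrite /neg_part; case: ifP => Hd.
  case: (boolP (Q b != 0)) => H; first by move: (Ha _ H); move: Hd; lia.
  move: H; rewrite negbK => /eqP H; by rewrite /mk H sub0r.
case: (boolP (Q (rho p b) != 0)) => H2; last by move: H2; rewrite negbK => /eqP ->; rewrite oppr0.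
by move: (Ha _ H2); rewrite diag_rho; move: Hd; lia.
Qed.

Lemma once_mk_v (Q : filling) p (v : int) : (forall b, Q b != 0 -> 0 <= diag b) ->
  v != 0 -> (exists! c, Q c = v \/ Q c = - v) -> exists! b, mk Q p b = v.
Proof.
move=> Ha Hv [c [Hc Hu]].
have Hd: forall b', mk Q p b' = v -> (Q b' = v) \/ (Q (rho p b') = - v).
  move=> b' Hb'. have: mk Q p b' != 0 by rewrite Hb'.
  rewrite mk_dom // => /orP [H|H].
    by left; rewrite -(mk_pos p Ha H).
  by right; rewrite -Hb' (mk_neg Ha H) opprK.
case: Hc => Hc.
  have Hc0 : Q c != 0 by rewrite Hc.
  exists c; split; first by rewrite mk_pos.
  move=> b' /Hd [H|H]; first by apply: Hu; left.
  have E := Hu _ (or_intror H); move: Hc; rewrite E H => /eqP.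
  by move: Hv; lia.
have Hc0 : Q c != 0 by rewrite Hc oppr_eq0.
exists (rho p c); split; first by rewrite mk_rho mk_pos // Hc opprK.
move=> b' /Hd [H|H].
  have E := Hu _ (or_introl H); move: Hc; rewrite E H => /eqP.
  by move: Hv; lia.
by rewrite (Hu _ (or_intror H)) rhoK.
Qed.

Lemma inj_of n (f : filling) b b' : entriesP n f ->
  (forall k : nat, (1 <= k <= n)%N -> (exists! b, f b = k%:Z) /\ (exists! b, f b = - k%:Z)) ->
  f b != 0 -> f b = f b' -> b = b'.
Proof.
move=> He Ho Hb E; have [k Hk [H|H]] := He _ Hb; have [[c [_ U1]] [d [_ U2]]] := Ho _ Hk.
  by rewrite -(U1 b H) (U1 b' (etrans (esym E) H)).
by rewrite -(U2 b H) (U2 b' (etrans (esym E) H)).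
Qed.

Lemma mk_BY n (Q : filling) p : goodP n Q ->
  skew_convex (in_dom (mk Q p)) ->
  (forall i j j' : int, j < j' -> Q (rho p (i,j)) != 0 -> Q (i,j') != 0 ->
     - Q (rho p (i,j)) < Q (i,j')) ->
  (forall i i' j : int, i < i' -> Q (i,j) != 0 -> Q (rho p (i',j)) != 0 ->
     Q (i,j) < - Q (rho p (i',j))) ->
  B_Young n (mk Q p).
Proof.
move=> [Ha He Ho Hc Hr Hl] Hconv Hmr Hmc.
have Honce : forall k : nat, (1 <= k <= n)%N ->
    (exists! b, mk Q p b = k%:Z) /\ (exists! b, mk Q p b = - k%:Z).
  move=> k Hk; have Hk0 : k%:Z != 0 by move: Hk; lia.
  split; apply: once_mk_v => //; first exact: Ho.
    by rewrite oppr_eq0.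
  have [c [Hc1 Hu]] := Ho _ Hk; exists c; split.
    by rewrite opprK; case: Hc1; [right|left].
  by move=> c'; rewrite opprK => H; apply: Hu; case: H; [right|left].
have Hent : entriesP n (mk Q p).
  move=> b; rewrite mk_dom // => /orP [H|H].
    by rewrite mk_pos //; apply: He.
  rewrite mk_neg //; have [k Hk [E|E]] := He _ H; exists k => //; rewrite E.
    by right. by left; rewrite opprK.
split => //; split => //; split => //; split.
  move=> b b' Hb Hb'.
  have E : b' = rho p b.
    apply: (@inj_of n (mk Q p) b' (rho p b)) => //.
      by rewrite Hb' oppr_eq0.
    by rewrite mk_rho.
  by rewrite E diag_rho.
split; first by exists p, (p - 1) => b; exact: mk_rho.
split.
  move=> i j j' Hjj; rewrite /in_dom !mk_dom // => /orP [H1|H1] /orP [H2|H2].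
  - by rewrite !mk_pos //; apply: Hr.
  - have := Ha _ H1; have := Ha _ H2; rewrite diag_rho /diag /=. move: Hjj. lia.
  - by rewrite mk_neg // mk_pos //; apply: Hmr.
  - rewrite !mk_neg //; suff: Q (rho p (i, j')) < Q (rho p (i, j)) by lia.
    by rewrite /rho; apply: Hr => //=; move: Hjj; lia.
move=> i i' j Hii; rewrite /in_dom !mk_dom // => /orP [H1|H1] /orP [H2|H2].
- by rewrite !mk_pos //; apply: Hl.
- by rewrite mk_pos // mk_neg //; apply: Hmc.
- have := Ha _ H1; have := Ha _ H2; rewrite diag_rho /diag /=; move: Hii; lia.
- rewrite !mk_neg //; suff: Q (rho p (i', j)) < Q (rho p (i, j)) by lia.
  by rewrite /rho; apply: Hl => //=; move: Hii; lia.
Qed.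

Lemma corner n (Q : filling) r c : goodP n Q -> Q (r,c) != 0 ->
  (forall b, Q b != 0 -> c - r <= diag b) ->
  forall b, Q b != 0 -> b.1 <= r /\ c <= b.2.
Proof.
move=> G Hrc Hmin [i j] Hb /=; have := Hmin _ Hb; rewrite /diag /= => Hd.
split.
  rewrite leNgt; apply/negP => Hir.
  have Hx : Q (i,c) != 0.
    by apply: (gp_c G (a:=(r,c)) (b:=(i,j))) => //=; apply/andP; split; lia.
  by have := Hmin _ Hx; rewrite /diag /=; lia.
rewrite leNgt; apply/negP => Hjc.
have Hx : Q (r,j) != 0.
  by apply: (gp_c G (a:=(i,j)) (b:=(r,c))) => //=; apply/andP; split; lia.
by have := Hmin _ Hx; rewrite /diag /=; lia.
Qed.

Lemma scenT n (Q : filling) r c p : goodP n Q -> Q (r,c) != 0 ->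
  (forall b, Q b != 0 -> b.1 <= r /\ c <= b.2) -> 2 * r < p -> p <= 2 * c ->
  B_Young n (mk Q p).
Proof.
move=> G Hrc Hco Hp1 Hp2; have Ha := gp_a G.
have Hneg : forall b, Q (rho p b) != 0 -> p - r <= b.1 /\ b.2 <= p - 1 - c.
  by move=> [i j] /Hco; rewrite /rho /=; lia.
apply: mk_BY => //.
- move=> [x1 x2] [y1 y2] [z1 z2]; rewrite /in_dom !mk_dom //= => Hx Hy /andP[h1 h2] /andP[h3 h4].
  case/orP: Hx => Hx; case/orP: Hy => Hy.
  + by rewrite (gp_c G Hx Hy) //= ?h1 ?h2 ?h3 ?h4.
  + by move: (Hco _ Hx) (Hneg _ Hy) => /=; lia.
  + by move: (Hneg _ Hx) (Hco _ Hy) => /=; lia.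
  + apply/orP; right; apply: (gp_c G Hy Hx); rewrite /rho /=; apply/andP; split; lia.
- by move=> i j j' _ /Hneg H1 /Hco H2; move: H1 H2 => /=; lia.
- by move=> i i' j _ /Hco H1 /Hneg H2; move: H1 H2 => /=; lia.
Qed.

Lemma scenV n (Q : filling) a : goodP n Q -> 0 < Q (a,a) ->
  (forall b, Q b != 0 -> b.1 <= a /\ a <= b.2) ->
  B_Young n (mk Q (2 * a)).
Proof.
move=> G Hpa Hco; have Ha := gp_a G.
have Haa : Q (a,a) != 0 by move: Hpa; lia.
have Hneg : forall b, Q (rho (2 * a) b) != 0 -> a <= b.1 /\ b.2 <= a - 1.
  by move=> [i j] /Hco; rewrite /rho /=; lia.
have Hpos : forall b, Q b != 0 -> b.1 = a -> 0 < Q b.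
  move=> [i j] Hb /= Ei; subst i; have := Hco _ Hb => /= [[_ Hj]].
  case: (ltrP a j) => Hj2; last by have -> : j = a by lia.
  by have := gp_r G Hj2 Haa Hb; lia.
apply: mk_BY => //.
- move=> [x1 x2] [y1 y2] [z1 z2]; rewrite /in_dom !mk_dom //= => Hx Hy /andP[h1 h2] /andP[h3 h4].
  case/orP: Hx => Hx; case/orP: Hy => Hy.
  + by rewrite (gp_c G Hx Hy) //= ?h1 ?h2 ?h3 ?h4.
  + by move: (Hco _ Hx) (Hneg _ Hy) => /=; lia.
  + move: (Hneg _ Hx) (Hco _ Hy) => /= [h5 h6] [h7 h8].
    case: (lerP a z2) => Hz.
      apply/orP; left; apply: (gp_c G Haa Hy) => /=; apply/andP; split; lia.
    apply/orP; right; apply: (gp_c G Haa Hx); rewrite /rho /=; apply/andP; split; lia.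
  + apply/orP; right; apply: (gp_c G Hy Hx); rewrite /rho /=; apply/andP; split; lia.
- move=> i j j' _ H1 H2; move: (Hneg _ H1) (Hco _ H2) => /= h1 h2.
  have := Hpos _ H1; have := Hpos _ H2; rewrite /rho /=; lia.
- by move=> i i' j _ /Hco H1 /Hneg H2; move: H1 H2 => /=; lia.
Qed.

Lemma scenH n (Q : filling) a : goodP n Q -> Q (a,a) < 0 ->
  (forall b, Q b != 0 -> b.1 <= a /\ a <= b.2) ->
  B_Young n (mk Q (2 * a + 1)).
Proof.
move=> G Hpa Hco; have Ha := gp_a G.
have Haa : Q (a,a) != 0 by move: Hpa; lia.
have Hneg : forall b, Q (rho (2 * a + 1) b) != 0 -> a + 1 <= b.1 /\ b.2 <= a.
  by move=> [i j] /Hco; rewrite /rho /=; lia.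
have Hng : forall b, Q b != 0 -> b.2 = a -> Q b < 0.
  move=> [i j] Hb /= Ej; subst j; have := Hco _ Hb => /= [[Hi _]].
  case: (ltrP i a) => Hi2; last by have -> : i = a by lia.
  by have := gp_l G Hi2 Hb Haa; lia.
apply: mk_BY => //.
- move=> [x1 x2] [y1 y2] [z1 z2]; rewrite /in_dom !mk_dom //= => Hx Hy /andP[h1 h2] /andP[h3 h4].
  case/orP: Hx => Hx; case/orP: Hy => Hy.
  + by rewrite (gp_c G Hx Hy) //= ?h1 ?h2 ?h3 ?h4.
  + move: (Hco _ Hx) (Hneg _ Hy) => /= [h5 h6] [h7 h8].
    case: (lerP z1 a) => Hz.
      apply/orP; left; apply: (gp_c G Hx Haa) => /=; apply/andP; split; lia.
    apply/orP; right; apply: (gp_c G Hy Haa); rewrite /rho /=; apply/andP; split; lia.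
  + by move: (Hneg _ Hx) (Hco _ Hy) => /=; lia.
  + apply/orP; right; apply: (gp_c G Hy Hx); rewrite /rho /=; apply/andP; split; lia.
- by move=> i j j' _ /Hneg H1 /Hco H2; move: H1 H2 => /=; lia.
- move=> i i' j _ H1 H2; move: (Hco _ H1) (Hneg _ H2) => /= h1 h2.
  have := Hng _ H1; have := Hng _ H2; rewrite /rho /=; lia.
Qed.

Definition shapeQ (lam : seq box) (Q : filling) :=
  exists t, forall b, (Q b != 0) = (boxB b t \in lam).

Lemma shape_pos lam f : pos_shape lam f -> shapeQ lam (pos_part f).
Proof.
move=> [t Ht]; exists t => b; rewrite -Ht /pos_part /in_dom.
by case: ifP => _; rewrite ?andbT ?andbF ?eqxx.
Qed.

Lemma shape_shift lam Q t : shapeQ lam Q -> shapeQ lam (shift Q t).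
Proof.
move=> [t0 Ht]; exists (boxD t t0) => b; rewrite /shift Ht.
have -> // : boxB (boxB b t) t0 = boxB b (boxD t t0).
case: b => i j; rewrite /boxB /boxD /=; congr pair; lia.
Qed.

Lemma shape_conv lam Q : skew_shape lam -> shapeQ lam Q ->
  skew_convex (fun b => Q b != 0).
Proof.
move=> [_ Hc] [t Ht] x y z; rewrite !Ht => Hx Hy h1 h2.
apply: (Hc _ _ _ Hx Hy); move: h1 h2; rewrite /boxB /=;
  move=> /andP[? ?] /andP[? ?]; apply/andP; split; lia.
Qed.

Lemma pos_shape_mk lam (Q : filling) p : (forall b, Q b != 0 -> 0 <= diag b) ->
  shapeQ lam Q -> pos_shape lam (mk Q p).
Proof.
move=> Ha [t Ht]; exists t => b; rewrite -Ht /in_dom mk_dom //.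
case: (boolP (Q b != 0)) => H /=; first by rewrite Ha.
case: (boolP (Q (rho p b) != 0)) => H2 //=.
have := Ha _ H2; rewrite diag_rho; apply: contraTF; lia.
Qed.

Lemma BY_rho n f b0 : B_Young n f -> in_dom f b0 ->
  exists p, forall b, f (rho p b) = - f b.
Proof.
move=> [He [Ho [Hc [Hd [[p [q Hs]] _]]]]] Hb0; exists p.
have := Hd b0 (p - b0.1, q - b0.2) Hb0 (Hs b0); rewrite /diag /= => E.
have Eq : q = p - 1 by lia.
by move=> b; rewrite /rho -Eq; exact: Hs.
Qed.

Lemma BY_mk f p : (forall b, f (rho p b) = - f b) ->
  forall b, f b = mk (pos_part f) p b.
Proof.
move=> Hs b; rewrite /mk /pos_part diag_rho Hs.
case: ifP => H; case: ifP => H2; move: H H2; try lia; by rewrite ?subr0 ?sub0r ?opprK.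
Qed.

Lemma boxBD b t : boxB (boxD b t) t = b.
Proof. case: b => i j; rewrite /boxB /boxD /=; congr pair; lia. Qed.
Lemma boxDB b t : boxD (boxB b t) t = b.
Proof. case: b => i j; rewrite /boxB /boxD /=; congr pair; lia. Qed.

Lemma goodP_shift n P t : goodP n P ->
  (forall b, P b != 0 -> 0 <= diag (boxD b t)) -> goodP n (shift P t).
Proof.
move=> [Ha He Ho Hc Hr Hl] Ha'; split; rewrite /shift.
- by move=> b /Ha'; rewrite boxDB.
- by move=> b /He.
- move=> k Hk; have [c [Hc1 Hu]] := Ho _ Hk; exists (boxD c t); split.
    by rewrite boxBD.
  by move=> c' /Hu ->; rewrite boxDB.
- move=> x y z Hx Hy h1 h2; apply: (Hc _ _ _ Hx Hy);
  move: h1 h2; rewrite /boxB /=; move=> /andP[? ?] /andP[? ?]; apply/andP; split; lia.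
- move=> i j j' Hj; rewrite /boxB /=; apply: Hr; lia.
- move=> i i' j Hj; rewrite /boxB /=; apply: Hl; lia.
Qed.

Lemma goodP_pos n f p lam : B_Young n f -> (forall b, f (rho p b) = - f b) ->
  skew_shape lam -> pos_shape lam f -> goodP n (pos_part f).
Proof.
move=> BY Hs Hl Hps; have BY' := BY.
move: BY' => [He [Ho [Hc [Hd [_ [Hr Hl']]]]]].
have Hpf : forall b, pos_part f b != 0 -> pos_part f b = f b /\ 0 <= diag b.
  by move=> b; rewrite /pos_part; case: ifP => //; rewrite eqxx.
split.
- by move=> b /Hpf [].
- move=> b Hb; have [E _] := Hpf _ Hb; rewrite E; apply: He; by rewrite /in_dom -E.
- move=> k Hk; have [[c [Hc1 _]] _] := Ho _ Hk.
  have [w [Hw1 Hw2]] : exists w, (pos_part f w = k%:Z \/ pos_part f w = - k%:Z) /\ pos_part f w != 0.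
    case: (lerP 0 (diag c)) => Hdc.
      by exists c; rewrite /pos_part Hdc Hc1; split; [left|]; move: Hk; lia.
    exists (rho p c); rewrite /pos_part diag_rho Hs Hc1.
    case: ifP => H; last by move: H Hdc; lia.
    by split; [right|]; move: Hk; lia.
  exists w; split => // c' Hc'.
  have Hc0 : pos_part f c' != 0 by case: Hc' => ->; move: Hk; lia.
  have [E1 D1] := Hpf _ Hw2; have [E2 D2] := Hpf _ Hc0.
  have [Ef|Ef] : f c' = f w \/ f c' = - f w.
    by rewrite -E1 -E2; case: Hc' => ->; case: Hw1 => ->; rewrite ?opprK; auto.
  + apply: (@inj_of n f w c') => //; first by rewrite -E1.
  + have : c' = rho p w.
      apply: (@inj_of n f c' (rho p w)) => //; first by rewrite -E2.
      by rewrite Hs.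
    by move=> E; move: D2; rewrite E diag_rho; move: D1; lia.
- exact: (shape_conv Hl (shape_pos Hps)).
- move=> i j j' Hj H1 H2; have [E1 _] := Hpf _ H1; have [E2 _] := Hpf _ H2.
  rewrite E1 E2; apply: Hr => //; rewrite /in_dom; by [rewrite -E1 | rewrite -E2].
- move=> i i' j Hj H1 H2; have [E1 _] := Hpf _ H1; have [E2 _] := Hpf _ H2.
  rewrite E1 E2; apply: Hl' => //; rewrite /in_dom; by [rewrite -E1 | rewrite -E2].
Qed.

Lemma U_center n f p a : B_Young n f -> (forall b, f (rho p b) = - f b) ->
  in_dom f (a,a) -> (forall b, in_dom f b -> diag b = 0 -> b = (a,a)) ->
  (p = 2 * a /\ 0 < f (a,a)) \/ (p = 2 * a + 1 /\ f (a,a) < 0).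
Proof.
move=> [He [Ho [Hc [Hd [_ [Hr Hl]]]]]] Hs Haa Hu.
have Hn0 : in_dom f (rho p (a,a)) by rewrite /in_dom Hs oppr_eq0.
case: (lerP p (2 * a)) => Hp.
  have H1 : in_dom f (a, a - 1).
    apply: (Hc _ _ _ Hn0 Haa); rewrite /rho /=; apply/andP; split; lia.
  have H2 : in_dom f (rho p (a, a - 1)) by rewrite /in_dom Hs oppr_eq0.
  have Hd2 : diag (rho p (a, a - 1)) = 0 by rewrite diag_rho /diag /=; lia.
  have E := Hu _ H2 Hd2.
  have E' := Hs (a, a - 1); rewrite E in E'.
  move: E; rewrite /rho => [[E1 _]]; have {}E1 : p - a = a := E1.
  have := Hr a (a - 1) a (ltac:(lia)) H1 Haa.
  move=> H; left; split; [move: E1; clear; lia | move: E' H; clear; set x := f (a,a); set y := f (a, a - 1); lia].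
have H1 : in_dom f (a + 1, a).
  apply: (Hc _ _ _ Haa Hn0); rewrite /rho /=; apply/andP; split; lia.
have H2 : in_dom f (rho p (a + 1, a)) by rewrite /in_dom Hs oppr_eq0.
have Hd2 : diag (rho p (a + 1, a)) = 0 by rewrite diag_rho /diag /=; lia.
have E := Hu _ H2 Hd2.
have E' := Hs (a + 1, a); rewrite E in E'.
move: E; rewrite /rho => [[E1 _]]; have {}E1 : p - (a + 1) = a := E1.
have := Hl a (a + 1) a (ltac:(lia)) Haa H1.
move=> H; right; split; [move: E1; clear; lia | move: E' H; clear; set x := f (a,a); set y := f (a + 1, a); lia].
Qed.

Lemma sf_sym f g : same_filling f g -> same_filling g f.
Proof.
move=> [[t1 t2] Ht]; exists (- t1, - t2) => b; rewrite -Ht.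
apply: f_equal; case: b => i j; rewrite /boxD /=; congr pair; lia.
Qed.

Lemma sf_trans f g h : same_filling f g -> same_filling g h -> same_filling f h.
Proof.
move=> [[u1 u2] H1] [[v1 v2] H2]; exists (boxD (u1,u2) (v1,v2)) => b; rewrite -H1 -H2.
apply: f_equal; case: b => i j; rewrite /boxD /=; congr pair; lia.
Qed.

Lemma neg_part_of f p b : (forall b, f (rho p b) = - f b) ->
  neg_part f b = - pos_part f (rho p b).
Proof.
move=> Hs; rewrite /neg_part /pos_part diag_rho Hs.
case: ifP => H; case: ifP => H2; move: H H2; try lia; by rewrite ?opprK ?oppr0.
Qed.

Lemma pos_part_ne f b : pos_part f b != 0 -> pos_part f b = f b /\ 0 <= diag b.
Proof. by rewrite /pos_part; case: ifP => //; rewrite eqxx. Qed.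

Lemma forward lam (m : nat) X a : skew_shape lam -> (0 < m)%N ->
  B_Young (size lam) X -> pos_shape lam X -> in_dom X (a,a) ->
  exists Y, T_m lam m Y /\ same_parts X Y.
Proof.
move=> Hl Hm BY Hps Haa.
have [p Hs] := BY_rho BY Haa.
set P := pos_part X.
have GP : goodP (size lam) P := goodP_pos BY Hs Hl Hps.
have PAA : P (a,a) != 0 by rewrite /P /pos_part /diag /= subrr lexx.
have Hco : forall b, P b != 0 -> b.1 <= a /\ a <= b.2.
  by apply: (corner GP PAA) => b /(gp_a GP); rewrite subrr.
set t : box := (0, m%:Z).
set Q := shift P t.
have GQ : goodP (size lam) Q.
  apply: goodP_shift => // b /(gp_a GP); case: b => i j; rewrite /diag /boxD /=; lia.
have QAA : Q (a, a + m%:Z) != 0.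
  by rewrite /Q /shift (_ : boxB _ _ = (a,a)) // /boxB /=; congr pair; lia.
have QCo : forall b, Q b != 0 -> b.1 <= a /\ a + m%:Z <= b.2.
  by move=> [i j] /Hco; rewrite /boxB /=; lia.
set Y := mk Q (2 * (a + m%:Z)).
have BYY : B_Young (size lam) Y.
  by apply: (scenT GQ QAA QCo); lia.
exists Y; split.
  split => //.
  - exact: pos_shape_mk (gp_a GQ) (shape_shift _ (shape_pos Hps)).
  - exists (a, a + m%:Z); split; first by rewrite /in_dom mk_dom ?QAA //; exact: gp_a GQ.
    by rewrite /diag /=; lia.
  - move=> b; rewrite /in_dom mk_dom; last exact: gp_a GQ.
    case/orP => H.
      move: H; rewrite /Q /shift => /(gp_a GP); case: b => i j; rewrite /diag /boxB /=; lia.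
    have := gp_a GQ H; rewrite diag_rho; lia.
split.
  exists t => b; rewrite pos_part_mk; last exact: gp_a GQ.
  by rewrite /Q /shift boxBD.
exists (2 * (a + m%:Z) - p, 2 * (a + m%:Z) - p - m%:Z) => b.
rewrite neg_part_mk; last exact: gp_a GQ.
rewrite (neg_part_of _ Hs) /Q /shift; congr (- P _).
case: b => i j; rewrite /rho /boxB /boxD /=; congr pair; lia.
Qed.

Lemma Ustruct lam X : skew_shape lam -> B_Young (size lam) X -> pos_shape lam X ->
  one_half_unique X -> exists a p,
  [/\ (forall b, X b = mk (pos_part X) p b), goodP (size lam) (pos_part X),
      pos_part X (a,a) = X (a,a) /\ X (a,a) != 0,
      (forall b, pos_part X b != 0 -> b.1 <= a /\ a <= b.2) &
      ((p = 2 * a /\ 0 < X (a,a)) \/ (p = 2 * a + 1 /\ X (a,a) < 0))].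
Proof.
move=> Hl BY Hps [[a a'] [[Hb Hd] Hu]].
have Ea : a' = a by move: Hd; rewrite /diag /=; lia.
subst a'.
have [p Hs] := BY_rho BY Hb.
have GP := goodP_pos BY Hs Hl Hps.
have PE : pos_part X (a,a) = X (a,a) by rewrite /pos_part /diag /= subrr lexx.
have PAA : pos_part X (a,a) != 0 by rewrite PE.
exists a, p; split => //.
- exact: BY_mk.
- by apply: (corner GP PAA) => b /(gp_a GP); rewrite subrr.
- apply: (U_center BY Hs Hb) => b H1 H2; symmetry; exact: Hu.
Qed.

Lemma inj_main lam X X' : skew_shape lam ->
  B_Young (size lam) X -> pos_shape lam X -> one_half_unique X ->
  B_Young (size lam) X' -> pos_shape lam X' -> one_half_unique X' ->
  same_filling (pos_part X) (pos_part X') -> same_filling X X'.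
Proof.
move=> Hl BY Hps Hh BY' Hps' Hh' [[t1 t2] Ht].
have [a [p [E G [PE X0] Co S]]] := Ustruct Hl BY Hps Hh.
have [a' [p' [E' G' [PE' X0'] Co' S']]] := Ustruct Hl BY' Hps' Hh'.
set P := pos_part X in Ht E G PE Co; set P' := pos_part X' in Ht E' G' PE' Co'.
have H1 : P' (a + t1, a + t2) != 0.
  by have := Ht (a,a); rewrite /boxD /= => ->; rewrite PE.
have H2 : P (a' - t1, a' - t2) != 0.
  have := Ht (a' - t1, a' - t2); rewrite /boxD /=.
  rewrite (_ : (a' - t1 + t1, a' - t2 + t2) = (a',a')); last by congr pair; lia.
  by move=> <-; rewrite PE'.
move: (Co' _ H1) (Co _ H2) => /= h1 h2.
have Et1 : t1 = a' - a by lia.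
have Et2 : t2 = a' - a by lia.
have Eval : X' (a',a') = X (a,a).
  rewrite -PE -PE' -Ht /boxD /=; congr P'; congr pair; lia.
have Ep : p' = p + 2 * (a' - a).
  move: S S'; rewrite Eval; lia.
exists (t1, t2) => b; rewrite E E' /mk.
have -> : rho p' (boxD b (t1, t2)) = boxD (rho p b) (t1, t2).
  case: b => i j; rewrite /rho /boxD /=; congr pair; lia.
by rewrite !Ht.
Qed.

Lemma backward lam (m : nat) Y : skew_shape lam -> (0 < m)%N -> T_m lam m Y ->
  exists X, (T_vert lam X \/ T_horiz lam X) /\ same_parts X Y.
Proof.
move=> Hl Hm [BY Hps [[r c] [Hb Hd]] Hmin].
have Ec : c = r + m%:Z by move: Hd; rewrite /diag /=; lia.
subst c.
have [p Hs] := BY_rho BY Hb.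
set P := pos_part Y.
have GP : goodP (size lam) P := goodP_pos BY Hs Hl Hps.
set t : box := (0, - m%:Z).
set Q := shift P t.
have GQ : goodP (size lam) Q.
  apply: goodP_shift => // b Hb'; have [E Hd'] := pos_part_ne Hb'.
  have Hdom : in_dom Y b by rewrite /in_dom -E.
  have := Hmin _ Hdom Hd'; case: b {Hb' E Hd' Hdom} => i j; rewrite /diag /boxD /=; lia.
have Ha := gp_a GQ.
have QE : Q (r,r) = Y (r, r + m%:Z).
  rewrite /Q /shift (_ : boxB _ _ = (r, r + m%:Z)); last by rewrite /boxB /=; congr pair; lia.
  by rewrite /P /pos_part ifT // Hd; lia.
have QAA : Q (r,r) != 0 by rewrite QE.
have Co : forall b, Q b != 0 -> b.1 <= r /\ r <= b.2.
  by apply: (corner GQ QAA) => b /Ha; rewrite subrr.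
have Hsh : shapeQ lam Q := shape_shift _ (shape_pos Hps).
have Hhalf : forall p', one_half_unique (mk Q p').
  move=> p'; exists (r,r); split.
    by split; [rewrite /in_dom mk_dom // QAA | rewrite /diag /= subrr].
  move=> b [] ; rewrite /in_dom mk_dom // => /orP [H|H] Hdb.
    by move: (Co _ H) Hdb; case: b {H} => i j; rewrite /diag /= => ? ?; congr pair; lia.
  by move: (Ha _ H); rewrite diag_rho Hdb; lia.
have SP : forall p', same_parts (mk Q p') Y.
  move=> p'; split.
    exists (0, m%:Z) => b; rewrite pos_part_mk // /Q /shift; congr P.
    by case: b => i j; rewrite /boxB /boxD /=; congr pair; lia.
  exists (p - p', p - p' - m%:Z) => b; rewrite neg_part_mk // (neg_part_of _ Hs).
  rewrite /Q /shift; congr (- P _).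
  by case: b => i j; rewrite /rho /boxB /boxD /=; congr pair; lia.
case: (ltrP 0 (Q (r,r))) => Hsg.
  exists (mk Q (2 * r)); split => //; left; split => //.
  - exact: scenV.
  - exact: pos_shape_mk.
  - exists r; left => b; rewrite /in_dom mk_dom // => /orP [H|H].
      move: (Ha _ H) (Co _ H); case: b {H} => i j; rewrite /diag /= => h1 h2.
      apply/idP/idP; lia.
    move: (Ha _ H) (Co _ H); case: b {H} => i j; rewrite /rho /diag /= => h1 h2.
    apply/idP/idP; lia.
have Hsg' : Q (r,r) < 0 by move: Hsg QAA; lia.
exists (mk Q (2 * r + 1)); split => //; right; split => //.
- exact: scenH.
- exact: pos_shape_mk.
- exists (r + 1); right => b; rewrite /in_dom mk_dom // => /orP [H|H].
    move: (Ha _ H) (Co _ H); case: b {H} => i j; rewrite /diag /= => h1 h2.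
    apply/idP/idP; lia.
  move: (Ha _ H) (Co _ H); case: b {H} => i j; rewrite /rho /diag /= => h1 h2.
  apply/idP/idP; lia.
Qed.

Lemma Ufacts lam X : T_vert lam X \/ T_horiz lam X ->
  [/\ B_Young (size lam) X, pos_shape lam X & one_half_unique X].
Proof. by case=> [[? ? ? _]|[? ? ? _]]; split. Qed.

Theorem proposition6p8 (lam : seq box) (m : nat) :
  skew_shape lam -> (0 < m)%N ->
  let U := fun X => T_vert lam X \/ T_horiz lam X in
  [/\ (* the map is defined: every X has an image *)
      (forall X, U X -> exists Y, T_m lam m Y /\ same_parts X Y),
      (* the image is unique (elements of T[lam,m] are determined by their
         positive-content part) *)
      (forall X Y Y', U X -> T_m lam m Y -> T_m lam m Y' ->
         same_parts X Y -> same_parts X Y' ->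
         same_filling (pos_part Y) (pos_part Y')),
      (* injectivity (tableaux up to translation) *)
      (forall X X' Y Y', U X -> U X' -> T_m lam m Y -> T_m lam m Y' ->
         same_parts X Y -> same_parts X' Y' ->
         same_filling (pos_part Y) (pos_part Y') -> same_filling X X') &
      (* surjectivity *)
      (forall Y, T_m lam m Y -> exists X, U X /\ same_parts X Y)].
Proof.
move=> Hl Hm U; rewrite {}/U; split.
- move=> X /Ufacts [BY Hps [[a a'] [[Hb Hd] _]]].
  have Ea : a' = a by move: Hd; rewrite /diag /=; lia.
  subst a'; exact: (forward Hl Hm BY Hps Hb).
- by move=> X Y Y' _ _ _ [H1 _] [H2 _]; exact: sf_trans (sf_sym H1) H2.
- move=> X X' Y Y' /Ufacts [BY Hps Hh] /Ufacts [BY' Hps' Hh'] _ _ [H1 _] [H2 _] H3.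
  exact: (inj_main Hl BY Hps Hh BY' Hps' Hh' (sf_trans H1 (sf_trans H3 (sf_sym H2)))).
- by move=> Y HY; exact: (backward Hl Hm HY).
Qed.
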